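(* Let $p_{0,0},p_{1,0}\in[0,1]$ with $p_{0,0}<p_{1,0}$ (negatively correlated arm) and $0\le\rho_0<\rho_1\le1$. Then the belief updates $\gamma_0$ and $\gamma_1$ defined in the context are decreasing in $\pi\in[0,1]$; moreover $\gamma_1$ is concave and $\gamma_0$ is convex, and $p_{0,0}\le\gamma_0(\pi)\le\gamma_1(\pi)\le p_{1,0}$ for all $\pi\in[0,1]$.
   Context: For $\pi\in[0,1]$ define $\gamma_1(\pi)=\frac{(1-\pi)\rho_1p_{1,0}+\pi\rho_0p_{0,0}}{\rho_1(1-\pi)+\rho_0\pi}$ and $\gamma_0(\pi)=\frac{(1-\pi)(1-\rho_1)p_{1,0}+\pi(1-\rho_0)p_{0,0}}{(1-\rho_1)(1-\pi)+(1-\rho_0)\pi}$. (These are the posterior probabilities of hidden state $0$ of a two-state Markov chain with transition probability $p_{i,0}$ from state $i$ to $0$, after an ACK, respectively a NACK, where $\rho_i$ is the ACK probability in state $i$.) *)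

(* Defs.v *)
From Stdlib Require Import Reals.
Open Scope R_scope.

(* Posterior probability of state 0 after an ACK. *)
Definition gamma1 (p00 p10 rho0 rho1 pi : R) : R :=
  ((1 - pi) * rho1 * p10 + pi * rho0 * p00) / (rho1 * (1 - pi) + rho0 * pi).

(* Posterior probability of state 0 after a NACK. *)
Definition gamma0 (p00 p10 rho0 rho1 pi : R) : R :=
  ((1 - pi) * (1 - rho1) * p10 + pi * (1 - rho0) * p00)
  / ((1 - rho1) * (1 - pi) + (1 - rho0) * pi).

(* Denominators (the probability of an ACK / a NACK). *)
Definition dack (rho0 rho1 pi : R) : R := rho1 * (1 - pi) + rho0 * pi.
Definition dnack (rho0 rho1 pi : R) : R := (1 - rho1) * (1 - pi) + (1 - rho0) * pi.

(* Main.v *)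
Require Import Defs.
From Stdlib Require Import Reals Lra Psatz.
Open Scope R_scope.

Lemma le_div_l (k N D : R) : 0 < D -> k * D <= N -> k <= N / D.
Proof. intros HD H. replace k with ((k * D) / D) by (field; lra).
  unfold Rdiv. apply Rmult_le_compat_r; [left; apply Rinv_0_lt_compat; lra| lra]. Qed.

Lemma le_div_r (k N D : R) : 0 < D -> N <= k * D -> N / D <= k.
Proof. intros HD H. replace k with ((k * D) / D) by (field; lra).
  unfold Rdiv. apply Rmult_le_compat_r; [left; apply Rinv_0_lt_compat; lra| lra]. Qed.

Lemma le_div_div (N1 D1 N2 D2 : R) : 0 < D1 -> 0 < D2 -> N1 * D2 <= N2 * D1 -> N1 / D1 <= N2 / D2.
Proof. intros H1 H2 H. apply le_div_r; [lra|].
  replace (N2 / D2 * D1) with ((N2 * D1) / D2) by (field; lra).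
  apply le_div_l; lra. Qed.

Definition lf (a b c d p : R) := (a + b * p) / (c + d * p).

Lemma lf_mono a b c d x y : x <= y -> 0 < c + d * x -> 0 < c + d * y ->
  a * d - b * c >= 0 -> lf a b c d y <= lf a b c d x.
Proof. intros Hxy Hx Hy Hs. unfold lf. apply le_div_div; try lra.
  assert (E : (a + b * x) * (c + d * y) - (a + b * y) * (c + d * x) = (y - x) * (a * d - b * c)) by ring.
  assert (0 <= (y - x) * (a * d - b * c)) by (apply Rmult_le_pos; lra). lra. Qed.

Lemma lf_conv_id a b c d x y t : 0 < c + d * x -> 0 < c + d * y ->
  0 < c + d * (t * x + (1 - t) * y) ->
  t * lf a b c d x + (1 - t) * lf a b c d y - lf a b c d (t * x + (1 - t) * y)
  = t * (1 - t) * (d * (a * d - b * c)) * ((y - x) * (y - x)) /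
    ((c + d * x) * (c + d * y) * (c + d * (t * x + (1 - t) * y))).
Proof. intros. unfold lf. field. repeat split; lra. Qed.

Lemma Mpos c d x y t : 0 < c + d * x -> 0 < c + d * y -> 0 <= t <= 1 ->
  0 < c + d * (t * x + (1 - t) * y).
Proof. intros. replace (c + d * (t * x + (1 - t) * y)) with (t * (c + d * x) + (1 - t) * (c + d * y)) by ring.
  destruct (Req_dec t 0) as [->|Ht]; [lra|].
  assert (0 < t * (c + d * x)) by (apply Rmult_lt_0_compat; lra).
  assert (0 <= (1 - t) * (c + d * y)) by (apply Rmult_le_pos; lra). lra. Qed.

Lemma lf_conc a b c d x y t : 0 < c + d * x -> 0 < c + d * y -> 0 <= t <= 1 ->
  d * (a * d - b * c) <= 0 ->
  t * lf a b c d x + (1 - t) * lf a b c d y <= lf a b c d (t * x + (1 - t) * y).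
Proof. intros Hx Hy Ht Hs. pose proof (Mpos c d x y t Hx Hy Ht) as HM.
  pose proof (lf_conv_id a b c d x y t Hx Hy HM) as E.
  assert (t * (1 - t) * (d * (a * d - b * c)) * ((y - x) * (y - x)) /
    ((c + d * x) * (c + d * y) * (c + d * (t * x + (1 - t) * y))) <= 0).
  { apply le_div_r. apply Rmult_lt_0_compat; [apply Rmult_lt_0_compat|]; lra.
    rewrite Rmult_0_l. assert (0 <= t * (1 - t)) by (apply Rmult_le_pos; lra).
    assert (0 <= (y - x) * (y - x)) by apply Rle_0_sqr.
    assert (0 <= t * (1 - t) * (-(d * (a * d - b * c)))) by (apply Rmult_le_pos; lra). nra. }
  lra. Qed.

Lemma lf_convx a b c d x y t : 0 < c + d * x -> 0 < c + d * y -> 0 <= t <= 1 ->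
  0 <= d * (a * d - b * c) ->
  lf a b c d (t * x + (1 - t) * y) <= t * lf a b c d x + (1 - t) * lf a b c d y.
Proof. intros Hx Hy Ht Hs. pose proof (Mpos c d x y t Hx Hy Ht) as HM.
  pose proof (lf_conv_id a b c d x y t Hx Hy HM) as E.
  assert (0 <= t * (1 - t) * (d * (a * d - b * c)) * ((y - x) * (y - x)) /
    ((c + d * x) * (c + d * y) * (c + d * (t * x + (1 - t) * y)))).
  { apply le_div_l. apply Rmult_lt_0_compat; [apply Rmult_lt_0_compat|]; lra.
    rewrite Rmult_0_l. assert (0 <= t * (1 - t)) by (apply Rmult_le_pos; lra).
    assert (0 <= (y - x) * (y - x)) by apply Rle_0_sqr.
    apply Rmult_le_pos; [apply Rmult_le_pos|]; lra. }
  lra. Qed.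

Lemma g1_lf p00 p10 rho0 rho1 p : gamma1 p00 p10 rho0 rho1 p =
  lf (rho1 * p10) (rho0 * p00 - rho1 * p10) rho1 (rho0 - rho1) p.
Proof. unfold gamma1, lf. f_equal; ring. Qed.
Lemma g0_lf p00 p10 rho0 rho1 p : gamma0 p00 p10 rho0 rho1 p =
  lf ((1 - rho1) * p10) ((1 - rho0) * p00 - (1 - rho1) * p10) (1 - rho1) (rho1 - rho0) p.
Proof. unfold gamma0, lf. f_equal; ring. Qed.
Theorem lemma5 (p00 p10 rho0 rho1 : R) :
  0 <= p00 <= 1 -> 0 <= p10 <= 1 -> p00 < p10 ->
  0 <= rho0 -> rho0 < rho1 -> rho1 <= 1 ->
  (* gamma1 is nonincreasing on the points of [0,1] where it is defined *)
  (forall x y, 0 <= x -> x <= y -> y <= 1 ->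
     0 < dack rho0 rho1 x -> 0 < dack rho0 rho1 y ->
     gamma1 p00 p10 rho0 rho1 y <= gamma1 p00 p10 rho0 rho1 x) /\
  (* gamma0 is nonincreasing on the points of [0,1] where it is defined *)
  (forall x y, 0 <= x -> x <= y -> y <= 1 ->
     0 < dnack rho0 rho1 x -> 0 < dnack rho0 rho1 y ->
     gamma0 p00 p10 rho0 rho1 y <= gamma0 p00 p10 rho0 rho1 x) /\
  (* gamma1 is concave *)
  (forall x y t, 0 <= x <= 1 -> 0 <= y <= 1 -> 0 <= t <= 1 ->
     0 < dack rho0 rho1 x -> 0 < dack rho0 rho1 y ->
     t * gamma1 p00 p10 rho0 rho1 x + (1 - t) * gamma1 p00 p10 rho0 rho1 y
       <= gamma1 p00 p10 rho0 rho1 (t * x + (1 - t) * y)) /\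
  (* gamma0 is convex *)
  (forall x y t, 0 <= x <= 1 -> 0 <= y <= 1 -> 0 <= t <= 1 ->
     0 < dnack rho0 rho1 x -> 0 < dnack rho0 rho1 y ->
     gamma0 p00 p10 rho0 rho1 (t * x + (1 - t) * y)
       <= t * gamma0 p00 p10 rho0 rho1 x + (1 - t) * gamma0 p00 p10 rho0 rho1 y) /\
  (* ordering *)
  (forall pi, 0 <= pi <= 1 ->
     0 < dack rho0 rho1 pi -> 0 < dnack rho0 rho1 pi ->
     p00 <= gamma0 p00 p10 rho0 rho1 pi /\
     gamma0 p00 p10 rho0 rho1 pi <= gamma1 p00 p10 rho0 rho1 pi /\
     gamma1 p00 p10 rho0 rho1 pi <= p10).
Proof.
  intros H00 H10 Hp Hr0 Hr Hr1.
  assert (Ea : forall p, dack rho0 rho1 p = rho1 + (rho0 - rho1) * p) by (intros; unfold dack; ring).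
  assert (En : forall p, dnack rho0 rho1 p = (1 - rho1) + (rho1 - rho0) * p) by (intros; unfold dnack; ring).
  assert (S1 : (rho1 * p10) * (rho0 - rho1) - (rho0 * p00 - rho1 * p10) * rho1 = rho1 * rho0 * (p10 - p00)) by ring.
  assert (S0 : ((1 - rho1) * p10) * (rho1 - rho0) - ((1 - rho0) * p00 - (1 - rho1) * p10) * (1 - rho1)
     = (1 - rho1) * (1 - rho0) * (p10 - p00)) by ring.
  assert (P1 : 0 <= rho1 * rho0 * (p10 - p00)) by (apply Rmult_le_pos; [apply Rmult_le_pos|]; lra).
  assert (P0 : 0 <= (1 - rho1) * (1 - rho0) * (p10 - p00)) by (apply Rmult_le_pos; [apply Rmult_le_pos|]; lra).
  split; [|split; [|split; [|split]]].
  - intros x y Hx Hxy Hy Dx Dy. rewrite !g1_lf. rewrite !Ea in *. apply lf_mono; lra.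
  - intros x y Hx Hxy Hy Dx Dy. rewrite !g0_lf. rewrite !En in *. apply lf_mono; lra.
  - intros x y t Hx Hy Ht Dx Dy. rewrite !g1_lf. rewrite !Ea in *. apply lf_conc; try lra.
    rewrite S1. assert (0 <= (rho1 - rho0) * (rho1 * rho0 * (p10 - p00))) by (apply Rmult_le_pos; lra). nra.
  - intros x y t Hx Hy Ht Dx Dy. rewrite !g0_lf. rewrite !En in *. apply lf_convx; try lra.
    rewrite S0. apply Rmult_le_pos; lra.
  - intros p Hpi Da Dn. unfold dack, dnack in *. unfold gamma0, gamma1. split; [|split].
    + apply le_div_l; [lra|].
      assert (0 <= (1 - p) * (1 - rho1) * (p10 - p00)) by (apply Rmult_le_pos; [apply Rmult_le_pos|]; lra). nra.
    + apply le_div_div; [lra|lra|].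
      assert (0 <= p * (1 - p) * (rho1 - rho0) * (p10 - p00)) by (repeat apply Rmult_le_pos; lra). nra.
    + apply le_div_r; [lra|].
      assert (0 <= p * rho0 * (p10 - p00)) by (repeat apply Rmult_le_pos; lra). nra.
Qed.
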